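(* Let $X$ be a topological space and let $D\subseteq X$ be such that the subspace $D$ is discrete. Then $D$ admits a Noetherian outer base in $X$.
   Context: A family $\mathcal G$ of open sets is Noetherian if $\langle\mathcal G,\subseteq\rangle$ contains no infinite strictly increasing sequence. For $Y\subseteq X$, a family $\mathcal B$ of open subsets of $X$ is an outer base of $Y$ in $X$ if for every $p\in Y$ the family $\{G\in\mathcal B: p\in G\}$ is a neighbourhood base of $p$ in $X$. *)

(* Defs.v *)
From mathcomp Require Import all_boot all_order.
From mathcomp Require Import all_classical topology.
Set Implicit Arguments. Unset Strict Implicit. Unset Printing Implicit Defensive.
Local Open Scope classical_set_scope.

Definition discrete_subspace (X : topologicalType) (D : set X) : Prop :=
  forall p, D p -> exists U : set X, open U /\ U `&` D = [set p].

Definition noetherian_family (X : topologicalType) (G : set (set X)) : Prop :=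
  (forall U, G U -> open U) /\
  ~ (exists f : nat -> set X, (forall n, G (f n)) /\ (forall n, f n `<` f n.+1)).

Definition outer_base (X : topologicalType) (Y : set X) (B : set (set X)) : Prop :=
  (forall U, B U -> open U) /\
  (forall p, Y p ->
     (forall U, B U -> U p -> nbhs p U) /\
     (forall N, nbhs p N -> exists U, [/\ B U, U p & U `<=` N])).

(* Main.v *)
Require Import Defs.
From mathcomp Require Import all_boot all_order.
From mathcomp Require Import all_classical topology.
From mathcomp Require Import wochoice.
Local Open Scope classical_set_scope.

Theorem corollary1 (X : topologicalType) (D : set X) :
  discrete_subspace D ->
  exists B : set (set X), outer_base D B /\ noetherian_family B.
Proof.
move=> hD.
have [R wR] := well_ordering_principle (set X).
have Rrefl : forall x, R x x.
  move=> x; have [z [[/eqP zx lb] _]] := wR (pred1 x) (ex_intro _ x (eqxx x)).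
  by subst z; apply: lb; rewrite inE.
have Ranti : forall x y, R x y -> R y x -> x = y.
  move=> x y rxy ryx.
  have [z [_ uz]] := wR (pred2 x y) (ex_intro _ x (introT orP (or_introl (eqxx x)))).
  have hx : minimum_of R (pred2 x y) x.
    split; first by rewrite inE eqxx.
    by move=> w; rewrite !inE => /orP[/eqP->|/eqP->].
  have hy : minimum_of R (pred2 x y) y.
    split; first by rewrite !inE eqxx orbT.
    by move=> w; rewrite !inE => /orP[/eqP->|/eqP->].
  by rewrite -(uz _ hx) -(uz _ hy).
pose B0 := fun V : set X => open V /\ exists p, V `&` D = [set p].
pose B := fun V : set X => B0 V /\ forall W, B0 W -> W `<=` V -> R V W.
exists B; split; [split|split].
- by move=> U [[]].
- move=> p Dp; split.
    by move=> U [[oU _] _] Up; apply: open_nbhs_nbhs.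
  move=> N; rewrite nbhsE => -[O [oO Op] ON].
  have [U [oU UD]] := hD p Dp.
  pose A : {pred set X} := [pred V | `[< B0 V /\ V p /\ V `<=` N >]].
  have Ane : nonempty A.
    exists (O `&` U); apply/asboolP; split; [split|split].
    + exact: openI.
    + exists p; rewrite -setIA UD; apply/seteqP; split=> x.
        by move=> [Ox ->].
      by move=> ->; split.
    + by split=> //; have [] : (U `&` D) p by rewrite UD.
    + by move=> x [Ox _]; apply: ON.
  have [W [[WA lbW] _]] := wR A Ane.
  move: WA; move=> /asboolP [B0W [Wp WN]].
  exists W; split=> //; split=> // W' B0W' W'W.
  apply: lbW; apply/asboolP; split=> //; split=> //.
    case: B0W' => _ [q W'D]; case: B0W => _ [r WD].
    have Dq : (W' `&` D) q by rewrite W'D.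
    have Dp' : (W `&` D) p.
      by split=> //.
    have Wq : (W `&` D) q by case: Dq => W'q Dq; split=> //; apply: W'W.
    move: Wq Dp'; rewrite WD => qr pr; rewrite pr -qr; by case: Dq.
  by move=> x /W'W /WN.
- by move=> U [[]].
- move=> [f [fB finc]].
  have fdec : forall n, R (f n.+1) (f n) /\ f n.+1 <> f n.
    move=> n; have [fsub fne] := finc n.
    split; last by move=> e; apply: fne; rewrite e.
    have [_ h] := fB n.+1; apply: h => //; by case: (fB n).
  pose A : {pred set X} := [pred V | `[< exists n, V = f n >]].
  have Ane : nonempty A by exists (f 0); apply/asboolP; exists 0.
  have [W [[WA lbW] _]] := wR A Ane.
  move: WA => /asboolP [m Wm]; subst W.
  have h : R (f m) (f m.+1) by apply: lbW; apply/asboolP; exists m.+1.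
  have [h2 ne] := fdec m.
  by apply: ne; apply: Ranti.
Qed.
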